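(* There exists a simple temporal graph $\mathcal G$ whose strict-journey reachability graph $\mathcal C(\mathcal G)$ is not isomorphic to the non-strict-journey reachability graph of any temporal graph $\mathcal H$. (For instance, $\mathcal G$ the path $a-b-c$ with $\lambda(ab)=\lambda(bc)=\{1\}$.)
   Context: A temporal graph is a triple $\mathcal G=(V,E,\lambda)$ where $V$ is a finite vertex set, $E$ is a set of undirected edges on $V$, and $\lambda:E\to 2^{\mathbb N}\setminus\{\emptyset\}$ assigns to each edge a nonempty set of presence times. The footprint of $\mathcal G$ is the static graph $(V,E)$. A contact is a pair $(e,t)$ with $e\in E$ and $t\in\lambda(e)$. A journey from $u$ to $v$ is a sequence of contacts $(e_1,t_1),\dots,(e_k,t_k)$, $k\ge 1$, such that $e_1,\dots,e_k$ form a path from $u$ to $v$ in the footprint and $t_1\le t_2\le\dots\le t_k$ (a non-strict journey); it is strict if $t_1<t_2<\dots<t_k$. $\mathcal G$ is simple if $|\lambda(e)|=1$ for every edge $e$. The reachability graph $\mathcal C(\mathcal G)$ (with respect to a chosen journey notion) is the directed graph on $V$ having an arc $(u,v)$, $u\neq v$, if and only if there is a journey from $u$ to $v$. Reachability graphs are compared up to isomorphism of directed graphs. *)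

(* Defs.v *)
From mathcomp Require Import all_boot.
Set Implicit Arguments. Unset Strict Implicit. Unset Printing Implicit Defensive.

(* A temporal graph on a finite vertex set V: undirected edges are given by a
   symmetric irreflexive relation [tedge]; [tlam u v t] says that time t is a
   presence time of the edge {u,v}. *)
Record tgraph (V : finType) := TGraph {
  tedge : rel V;
  tedge_sym : symmetric tedge;
  tedge_irr : irreflexive tedge;
  tlam : V -> V -> nat -> Prop;
  tlam_sym : forall u v t, tlam u v t <-> tlam v u t;
  tlam_edge : forall u v t, tlam u v t -> tedge u v;
  tlam_ne : forall u v, tedge u v -> exists t, tlam u v t
}.

Definition simple_tgraph (V : finType) (G : tgraph V) : Prop :=
  forall u v, tedge G u v -> exists! t, tlam G u v t.

(* A journey from u to v: a path u = x0, x1, ..., xk = v (k >= 1, distinct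
   vertices, consecutive ones adjacent) with times t1..tk, t_i a presence time
   of edge x_{i-1} x_i, non-decreasing (non-strict) or increasing (strict). *)
Definition journey (V : finType) (strict : bool) (G : tgraph V) (u v : V) : Prop :=
  exists (p : seq V) (ts : seq nat),
    [/\ 0 < size p, last u p = v, uniq (u :: p) & path (tedge G) u p] /\
    [/\ size ts = size p,
        (forall i, i < size p -> tlam G (nth u (u :: p) i) (nth u p i) (nth 0 ts i))
      & sorted (fun a b : nat => if strict then a < b else a <= b) ts].

Definition reach_graph (V : finType) (strict : bool) (G : tgraph V) : V -> V -> Prop :=
  fun u v => u <> v /\ journey strict G u v.

Definition digraph_iso (V W : finType) (R : V -> V -> Prop) (S : W -> W -> Prop) : Prop :=
  exists f : V -> W, bijective f /\ forall u v, R u v <-> S (f u) (f v).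

(* Main.v *)
Require Import Defs.
From mathcomp Require Import all_boot.
Set Implicit Arguments. Unset Strict Implicit. Unset Printing Implicit Defensive.

Definition gE : rel 'I_3 := fun u v => (u.+1 == v :> nat) || (v.+1 == u :> nat).

Lemma gE_sym : symmetric gE.
Proof. by move=> u v; rewrite /gE orbC. Qed.
Lemma gE_irr : irreflexive gE.
Proof. move=> u; rewrite /gE; apply/negbTE; rewrite negb_or. by rewrite eqn_leq ltnn. Qed.

Definition gL (u v : 'I_3) (t : nat) : Prop := gE u v /\ t = 1.
Lemma gL_sym u v t : gL u v t <-> gL v u t.
Proof. by rewrite /gL gE_sym. Qed.
Lemma gL_edge u v t : gL u v t -> gE u v.
Proof. by case. Qed.
Lemma gL_ne u v : gE u v -> exists t, gL u v t.
Proof. by move=> h; exists 1. Qed.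

Definition G3 : tgraph 'I_3 := TGraph gE_sym gE_irr gL_sym gL_edge gL_ne.

Definition a0 : 'I_3 := @Ordinal 3 0 isT.
Definition a1 : 'I_3 := @Ordinal 3 1 isT.
Definition a2 : 'I_3 := @Ordinal 3 2 isT.

Section H.
Variables (W : finType) (H : tgraph W).

Lemma one_step s u w t : u != w -> tlam H u w t -> journey s H u w.
Proof.
move=> uw hl; exists [:: w], [:: t]; split; split => //=.
- by rewrite ?inE ?mem_seq1 ?andbT.
- by rewrite (tlam_edge hl).
- by case=> // _.
Qed.

Lemma two_step u v w t1 t2 : u != v -> u != w -> v != w ->
  tlam H u v t1 -> tlam H v w t2 -> t1 <= t2 -> journey false H u w.
Proof.
move=> uv uw vw h1 h2 le; exists [:: v; w], [:: t1; t2]; split; split => //=.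
- by rewrite ?inE ?negb_or ?uv ?uw ?vw.
- by rewrite (tlam_edge h1) (tlam_edge h2).
- by case=> [|[|]] //.
- by rewrite le.
Qed.

Lemma first_step s u v : journey s H u v -> exists w t, u != w /\ tlam H u w t.
Proof.
case=> [[|w p] [ts [[Hs Hl Hu Hp] [Hts Hlam Hsort]]]] //.
exists w, (nth 0 ts 0); split; last exact: (Hlam 0 isT).
by move: Hu => /= /andP [] ; rewrite inE negb_or => /andP [].
Qed.
End H.

Lemma no_journey_02 : ~ journey true G3 a0 a2.
Proof.
case=> p [ts [[Hs Hl Hu Hp] [Hts Hlam Hsort]]].
case: p Hs Hl Hu Hp Hts Hlam => [|x [|y [|z r]]] //= _ Hl Hu Hp Hts Hlam.
- by move: Hp; rewrite Hl andbT.
- have Hx := Hlam 0 isT; have Hy := Hlam 1 isT.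
  move: Hp Hl Hx Hy => /=; rewrite /gE /= => /andP [h1 _] Hl [_ e1] [_ e2].
  move: e1 e2 {Hlam}; case: ts Hts Hsort => [|t1 [|t2 [|]]] //= _; rewrite ?andbT => lt e1 e2.
  by move: lt; rewrite e1 e2.
- have := max_card (mem [:: a0, x, y, z & r]).
  rewrite (elimT (@card_uniqP _ [:: a0, x, y, z & r]) Hu); rewrite card_ord /=. by rewrite ltnS ltnS ltnS ltn0.
Qed.

Lemma no_journey_20 : ~ journey true G3 a2 a0.
Proof.
case=> p [ts [[Hs Hl Hu Hp] [Hts Hlam Hsort]]].
case: p Hs Hl Hu Hp Hts Hlam => [|x [|y [|z r]]] //= _ Hl Hu Hp Hts Hlam.
- by move: Hp; rewrite Hl andbT.
- have Hx := Hlam 0 isT; have Hy := Hlam 1 isT.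
  move: Hp Hl Hx Hy => /=; rewrite /gE /= => /andP [h1 _] Hl [_ e1] [_ e2].
  move: e1 e2 {Hlam}; case: ts Hts Hsort => [|t1 [|t2 [|]]] //= _; rewrite ?andbT => lt e1 e2.
  by move: lt; rewrite e1 e2.
- have := max_card (mem [:: a2, x, y, z & r]).
  rewrite (elimT (@card_uniqP _ [:: a2, x, y, z & r]) Hu); rewrite card_ord /=. by rewrite ltnS ltnS ltnS ltn0.
Qed.

Theorem mainTheorem4 :
  exists (V : finType) (G : tgraph V),
    simple_tgraph G /\
    forall (W : finType) (H : tgraph W),
      ~ digraph_iso (reach_graph true G) (reach_graph false H).
Proof.
exists ('I_3 : finType), G3; split.
  by move=> u v e; exists 1; split => // t [].
move=> W H [f [[g fK gK] Hiso]].
have finj : injective f := can_inj fK.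
have R01 : reach_graph true G3 a0 a1.
  by split => //; apply: (@one_step _ G3 true a0 a1 1) => //; split.
have R21 : reach_graph true G3 a2 a1.
  by split => //; apply: (@one_step _ G3 true a2 a1 1) => //; split.
have N02 : ~ reach_graph true G3 a0 a2 by case=> _ /no_journey_02.
have N20 : ~ reach_graph true G3 a2 a0 by case=> _ /no_journey_20.
have d01 : f a0 != f a1 by rewrite (inj_eq finj).
have d02 : f a0 != f a2 by rewrite (inj_eq finj).
have d12 : f a1 != f a2 by rewrite (inj_eq finj).
have cover : forall w, [\/ w = f a0, w = f a1 | w = f a2].
  move=> w; rewrite -(gK w); case: (g w) => [[|[|[|m]]] hm] //.
  - by constructor 1; congr f; apply: val_inj.
  - by constructor 2; congr f; apply: val_inj.
  - by constructor 3; congr f; apply: val_inj.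
have [_ J01] := (proj1 (Hiso _ _) R01).
have [_ J21] := (proj1 (Hiso _ _) R21).
have E01 : exists t, tlam H (f a0) (f a1) t.
  have [w [t [nw hw]]] := first_step J01.
  case: (cover w) => ew; subst w.
  - by rewrite eqxx in nw.
  - by exists t.
  - exfalso; apply: N02; apply/Hiso; split; first by apply/eqP.
    exact: one_step hw.
have E21 : exists t, tlam H (f a2) (f a1) t.
  have [w [t [nw hw]]] := first_step J21.
  case: (cover w) => ew; subst w.
  - exfalso; apply: N20; apply/Hiso; split; first by apply/eqP; rewrite eq_sym.
    exact: one_step hw.
  - by exists t.
  - by rewrite eqxx in nw.
case: E01 => t1 h1; case: E21 => t2 h2.
case: (leqP t1 t2) => le.
- apply: N02; apply/Hiso; split; first by apply/eqP.
  apply: (two_step d01 d02 d12 h1 _ le); by apply/(tlam_sym H).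
- apply: N20; apply/Hiso; split; first by apply/eqP; rewrite eq_sym.
  have h1' : tlam H (f a1) (f a0) t1 by apply/(tlam_sym H).
  apply: (two_step _ _ _ h2 h1' (ltnW le)); by rewrite eq_sym.
Qed.
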